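(* Let $E$ be an arbitrary graph and consider the groupoid $\mathcal{G}_E$ with cocycle $\widetilde{w}:\mathcal{G}_E\to\mathbb{Z}$, $\widetilde{w}(x,k,y)=k$. Then $\widetilde{w}$ is star injective if and only if $|r_E^{-1}(v)|\le1$ for every $v\in E^0$ (i.e. every vertex receives at most one edge).
   Context: Graph $E=(E^0,E^1,r_E,s_E)$; paths, $E^*$ (finite paths, including vertices), $E^\infty$ (infinite paths); $|\alpha|$ is the length of a path. A vertex is regular if it emits a finite nonzero number of edges. $X=E^\infty\cup\{\mu\in E^*: r(\mu)\text{ is not regular}\}$. $\mathcal{G}_E=\{(\alpha x,|\alpha|-|\beta|,\beta x):\alpha,\beta\in E^*,\ x\in X,\ r(\alpha)=r(\beta)=s(x)\}$, with $(x,k,y)$ a morphism from $y$ (domain) to $x$ (range), composition $(x,k,y)(y,l,z)=(x,k+l,z)$, inverse $(x,k,y)^{-1}=(y,-k,x)$, and unit space identified with $X$. Viewing $\mathbb{Z}$ as a one-object category, a functor $F:\mathcal{C}\to\mathcal{D}$ is star injective if for each object $x$ its restriction to $\operatorname{Star}(x)=\{\text{morphisms with domain }x\}$ is injective; here $\operatorname{Star}(x)=\{(y,k,x)\in\mathcal{G}_E\}$. *)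

(* Defs.v *)
From Stdlib Require Import ZArith List.
Import ListNotations.
Open Scope Z_scope.

Section Graph.
Variables (E0 E1 : Type) (r s : E1 -> E0).

(* Finite paths: a start vertex v together with a list of edges e1 ... en
   with s e1 = v and r e_i = s e_{i+1}.  Length-0 paths are vertices. *)
Fixpoint fpath (v : E0) (l : list E1) : Prop :=
  match l with
  | [] => True
  | e :: l' => s e = v /\ fpath (r e) l'
  end.

Fixpoint frange (v : E0) (l : list E1) : E0 :=
  match l with
  | [] => v
  | e :: l' => frange (r e) l'
  end.

Definition ipath (f : nat -> E1) : Prop := forall n, r (f n) = s (f (S n)).

Definition regular (v : E0) : Prop :=
  (exists e, s e = v) /\ (exists L : list E1, forall e, s e = v -> In e L).

Inductive bpath : Type :=
  | Fin : E0 -> list E1 -> bpath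
  | Inf : (nat -> E1) -> bpath.

Definition in_X (x : bpath) : Prop :=
  match x with
  | Fin v l => fpath v l /\ ~ regular (frange v l)
  | Inf f => ipath f
  end.

Definition bsrc (x : bpath) : E0 :=
  match x with
  | Fin v _ => v
  | Inf f => s (f 0%nat)
  end.

Definition prepend (l : list E1) (f : nat -> E1) : nat -> E1 :=
  fun n => match nth_error l n with
           | Some e => e
           | None => f (n - length l)%nat
           end.

Definition bcat (v : E0) (l : list E1) (x : bpath) : bpath :=
  match x with
  | Fin _ m => Fin v (l ++ m)
  | Inf f => Inf (prepend l f)
  end.

Definition in_GE (g : bpath * Z * bpath) : Prop :=
  exists (va : E0) (a : list E1) (vb : E0) (b : list E1) (z : bpath),
    fpath va a /\ fpath vb b /\ in_X z /\
    frange va a = bsrc z /\ frange vb b = bsrc z /\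
    g = (bcat va a z, Z.of_nat (length a) - Z.of_nat (length b), bcat vb b z).

Definition GE_dom (g : bpath * Z * bpath) : bpath := snd g.

Definition wtilde (g : bpath * Z * bpath) : Z := snd (fst g).

End Graph.

(* Generic star injectivity of a functor F from a category (given by its
   set of morphisms, their domains) into Z viewed as a one-object category:
   for every object x, F restricted to Star(x) is injective. *)
Definition star_injective {Obj Mor : Type} (isObj : Obj -> Prop)
  (isMor : Mor -> Prop) (dom : Mor -> Obj) (F : Mor -> Z) : Prop :=
  forall x, isObj x ->
    forall g h, isMor g -> isMor h -> dom g = x -> dom h = x ->
      F g = F h -> g = h.

(* Main.v *)
Require Import Defs.
From Stdlib Require Import ZArith List Lia Classical ClassicalEpsilon FunctionalExtensionality.
Import ListNotations.

Section S.
Variables (E0 E1 : Type) (r s : E1 -> E0).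
Notation fp := (fpath E0 E1 r s).
Notation fr := (frange E0 E1 r).
Notation bp := (bpath E0 E1).
Notation Fin := (Fin E0 E1).
Notation Inf := (Inf E0 E1).
Notation bs := (bsrc E0 E1 s).
Notation bc := (bcat E0 E1).
Notation pre := (prepend E1).

Definition tail (n : nat) (w : bp) : bp :=
  match w with
  | Defs.Fin _ _ v l => Fin (fr v (firstn n l)) (skipn n l)
  | Defs.Inf _ _ f => Inf (fun m => f (m + n)%nat)
  end.

Definition prefix (n : nat) (w : bp) : list E1 :=
  match w with
  | Defs.Fin _ _ v l => firstn n l
  | Defs.Inf _ _ f => map f (seq 0 n)
  end.

Definition lenok (n : nat) (w : bp) : Prop :=
  match w with
  | Defs.Fin _ _ v l => (n <= length l)%nat
  | Defs.Inf _ _ f => True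
  end.

Lemma frange_app v a b : fr v (a ++ b) = fr (fr v a) b.
Proof. revert v; induction a; simpl; auto. Qed.

Lemma fpath_app v a b : fp v a -> fp (fr v a) b -> fp v (a ++ b).
Proof. revert v; induction a; simpl; intros v H1 H2; auto. destruct H1; split; auto. Qed.

Lemma fpath_app_inv v a b : fp v (a ++ b) -> fp v a /\ fp (fr v a) b.
Proof. revert v; induction a; simpl; intros v H; auto. destruct H as [H1 H2].
  apply IHa in H2. tauto. Qed.

Lemma pre_lt a f n : (n < length a)%nat -> exists e, nth_error a n = Some e /\ pre a f n = e.
Proof. intros H. unfold prepend. destruct (nth_error a n) eqn:E.
  - eauto.
  - apply nth_error_None in E. lia. Qed.

Lemma pre_ge a f n : (length a <= n)%nat -> pre a f n = f (n - length a)%nat.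
Proof. intros H. unfold prepend. rewrite (proj2 (nth_error_None a n) H). auto. Qed.

Lemma tail_bcat vb b z d : fr vb b = bs z -> tail (length b + d) (bc vb b z) = tail d z.
Proof.
  destruct z as [vz m | f]; simpl; intros H.
  - rewrite firstn_app, skipn_app.
    replace (length b + d - length b)%nat with d by lia.
    rewrite firstn_all2 by lia. rewrite skipn_all2 by lia. simpl.
    rewrite frange_app, H. reflexivity.
  - f_equal. apply functional_extensionality. intro k.
    rewrite pre_ge by lia. f_equal. lia.
Qed.

Lemma tail0 z : tail 0 z = z.
Proof. destruct z; simpl; auto. f_equal. apply functional_extensionality; intro; f_equal; lia. Qed.

Lemma bcat_assoc va a vz p t : bc va a (bc vz p t) = bc va (a ++ p) t.
Proof.
  destruct t as [vt m | f]; simpl.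
  - rewrite app_assoc; auto.
  - f_equal. apply functional_extensionality. intro n.
    destruct (Nat.lt_ge_cases n (length a)).
    + destruct (pre_lt a (pre p f) n H) as [e [E1' E2']]. rewrite E2'.
      unfold prepend. rewrite nth_error_app1 by lia. rewrite E1'. auto.
    + rewrite pre_ge by lia. unfold prepend. rewrite nth_error_app2 by lia.
      destruct (nth_error p (n - length a)) eqn:E; auto.
      rewrite length_app. f_equal. lia.
Qed.

Lemma recon d z : lenok d z -> bc (bs z) (prefix d z) (tail d z) = z.
Proof.
  destruct z as [vz m | f]; simpl; intros H.
  - rewrite firstn_skipn. auto.
  - f_equal. apply functional_extensionality. intro n. unfold prepend.
    destruct (Nat.lt_ge_cases n d).
    + rewrite nth_error_map. rewrite nth_error_seq.
      destruct (Nat.ltb_spec n d); [|lia]. simpl. auto.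
    + rewrite (proj2 (nth_error_None _ n)). 2: rewrite length_map, length_seq; lia.
      rewrite length_map, length_seq. f_equal. lia.
Qed.

Definition valid (w : bp) : Prop :=
  match w with
  | Defs.Fin _ _ v l => fp v l
  | Defs.Inf _ _ f => ipath E0 E1 r s f
  end.

Lemma prefix_ok d z : valid z -> lenok d z ->
  fp (bs z) (prefix d z) /\ fr (bs z) (prefix d z) = bs (tail d z).
Proof.
  destruct z as [vz m | f]; simpl; intros V L.
  - rewrite <- (firstn_skipn d m) in V. apply fpath_app_inv in V. tauto.
  - assert (G : forall k j, s (f j) = s (f j) -> fp (s (f j)) (map f (seq j k)) /\
       fr (s (f j)) (map f (seq j k)) = s (f (k + j)%nat)).
    { induction k; intros j _; simpl; auto. destruct (IHk (S j) eq_refl) as [A B].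
      rewrite V. replace (k + S j)%nat with (S (k + j)) in B by lia. auto. }
    destruct (G d 0%nat eq_refl) as [A B]. split; auto. rewrite B, Nat.add_0_r. auto.
Qed.

Lemma valid_bcat va a z : fp va a -> valid z -> fr va a = bs z ->
  valid (bc va a z) /\ bs (bc va a z) = va.
Proof.
  destruct z as [vz m | f]; simpl; intros Ha V H.
  - split; auto. apply fpath_app; auto. rewrite H; auto.
  - split.
    + intro n. destruct (Nat.lt_ge_cases (S n) (length a)).
      * destruct (pre_lt a f n ltac:(lia)) as [e1 [A1 B1]].
        destruct (pre_lt a f (S n) H0) as [e2 [A2 B2]]. rewrite B1, B2.
        clear -Ha A1 A2. revert va n Ha A1 A2. induction a; intros va n Ha A1 A2.
        { destruct n; discriminate. }
        destruct Ha as [_ Ha]. destruct n.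
        { simpl in *. injection A1 as <-. destruct a0; simpl in *; [discriminate|].
          injection A2 as <-. symmetry; apply Ha. }
        simpl in A1, A2. eapply IHa; eauto.
      * rewrite (pre_ge a f (S n)) by lia.
        destruct (Nat.eq_dec (length a) (S n)).
        -- destruct (pre_lt a f n ltac:(lia)) as [e1 [A1 B1]]. rewrite B1.
           replace (S n - length a)%nat with 0%nat by lia. rewrite <- H.
           clear -Ha A1 e. revert va n Ha A1 e. induction a; intros va n Ha A1 e'.
           { discriminate. }
           destruct Ha as [_ Ha]. destruct n; simpl in *.
           { injection A1 as <-. destruct a0; simpl in *; [auto|discriminate]. }
           eapply IHa; eauto.
        -- rewrite pre_ge by lia. replace (S n - length a)%nat with (S (n - length a)) by lia.
           apply V.
    + unfold prepend. destruct a as [|e a]; simpl in *.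
      * auto.
      * apply Ha.
Qed.

Lemma uniq (Hr : forall v e1 e2, r e1 = v -> r e2 = v -> e1 = e2) :
  forall a b va vb, fp va a -> fp vb b -> fr va a = fr vb b -> length a = length b ->
  va = vb /\ a = b.
Proof.
  induction a; intros [|e b] va vb Ha Hb Hf Hl; simpl in *; try discriminate; auto.
  destruct Ha as [Ha1 Ha2], Hb as [Hb1 Hb2].
  destruct (IHa b _ _ Ha2 Hb2 Hf ltac:(lia)) as [Hv He].
  assert (a = e) by (eapply Hr; eauto). subst. auto.
Qed.

Lemma core (Hr : forall v e1 e2, r e1 = v -> r e2 = v -> e1 = e2)
  va a vb b z va' a' vb' b' z' :
  fp va a -> fp vb b -> in_X E0 E1 r s z -> fr va a = bs z -> fr vb b = bs z ->
  fp va' a' -> fp vb' b' -> in_X E0 E1 r s z' -> fr va' a' = bs z' -> fr vb' b' = bs z' ->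
  bc vb b z = bc vb' b' z' ->
  (Z.of_nat (length a) - Z.of_nat (length b) = Z.of_nat (length a') - Z.of_nat (length b'))%Z ->
  (length b <= length b')%nat ->
  bc va a z = bc va' a' z'.
Proof.
  intros Ha Hb Hz Haz Hbz Ha' Hb' Hz' Haz' Hbz' Hy Hk Hle.
  set (d := (length b' - length b)%nat).
  assert (Vz : valid z) by (destruct z; simpl in *; tauto).
  assert (Ez' : z' = tail d z).
  { rewrite <- (tail_bcat vb b z d Hbz). rewrite Hy.
    replace (length b + d)%nat with (length b' + 0)%nat by lia.
    rewrite tail_bcat by auto. symmetry; apply tail0. }
  assert (Ld : lenok d z).
  { destruct z as [vz m|f]; simpl; auto. destruct z' as [vz' m'|f']; simpl in Hy; try discriminate.
    injection Hy as _ Hy. apply (f_equal (@length _)) in Hy. rewrite !length_app in Hy. lia. }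
  destruct (prefix_ok d z Vz Ld) as [P1 P2].
  rewrite <- (recon d z Ld), bcat_assoc. rewrite <- Ez'.
  assert (U : va = va' /\ a ++ prefix d z = a').
  { apply uniq; auto.
    - apply fpath_app; auto. rewrite Haz; auto.
    - rewrite frange_app, Haz, P2, <- Ez', Haz'. auto.
    - rewrite length_app. destruct z as [vz m|f]; simpl in *.
      + rewrite length_firstn. lia.
      + rewrite length_map, length_seq. lia. }
  destruct U as [-> ->]. auto.
Qed.

Lemma exmin (P : nat -> Prop) : (exists n, P n) -> exists n, P n /\ forall m, (m < n)%nat -> ~ P m.
Proof.
  intros [n Hn]. induction n as [n IH] using (well_founded_induction lt_wf).
  destruct (classic (exists m, (m < n)%nat /\ P m)) as [[m [Hm Pm]]|N].
  - eapply IH; eauto.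
  - exists n. split; auto. intros m Hm Pm. apply N; eauto.
Qed.

Lemma exists_bpath (e0 : E1) (v : E0) : exists x, in_X E0 E1 r s x /\ bs x = v.
Proof.
  set (nxt := fun u => epsilon (inhabits e0) (fun e => s e = u)).
  assert (Hn : forall u, regular E0 E1 s u -> s (nxt u) = u).
  { intros u [H _]. apply (epsilon_spec (inhabits e0) (fun e => s e = u) H). }
  set (u := fix u n := match n with O => v | S k => r (nxt (u k)) end).
  destruct (classic (forall n, regular E0 E1 s (u n))) as [A|A].
  - exists (Inf (fun n => nxt (u n))). simpl. split.
    + intro n. symmetry. apply Hn. apply (A (S n)).
    + apply Hn, (A 0%nat).
  - apply not_all_ex_not in A. apply exmin in A. destruct A as [n [Nn Mn]].
    assert (G : forall k j, (forall m, (m < k)%nat -> regular E0 E1 s (u (j + m)%nat)) ->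
      fp (u j) (map (fun n => nxt (u n)) (seq j k)) /\
      fr (u j) (map (fun n => nxt (u n)) (seq j k)) = u (j + k)%nat).
    { induction k; intros j R; simpl. { rewrite Nat.add_0_r; auto. }
      destruct (IHk (S j)) as [P Q].
      { intros m Hm. replace (S j + m)%nat with (j + S m)%nat by lia. apply R; lia. }
      replace (j + S k)%nat with (S j + k)%nat by lia.
      split; [split|]; auto. apply Hn. rewrite <- (Nat.add_0_r j). apply R. lia. }
    destruct (G n 0%nat) as [P Q].
    { intros m Hm. simpl. apply NNPP. apply Mn. auto. }
    exists (Fin v (map (fun n => nxt (u n)) (seq 0 n))). simpl. split; auto.
    split; auto. simpl in Q. rewrite Q. auto.
Qed.

End S.

Theorem mainTheorem16 (E0 E1 : Type) (r s : E1 -> E0) :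
  star_injective (in_X E0 E1 r s) (in_GE E0 E1 r s) (@GE_dom E0 E1) (@wtilde E0 E1)
  <-> (forall (v : E0) (e1 e2 : E1), r e1 = v -> r e2 = v -> e1 = e2).
Proof.
  split.
  - intros SI v e1 e2 H1 H2.
    destruct (exists_bpath E0 E1 r s e1 v) as [x [Hx Hb]].
    assert (Hd : bcat E0 E1 v [] x = x).
    { destruct x as [vx l|f]; simpl in *; [rewrite <- Hb; auto|]. f_equal. apply functional_extensionality. intro n. unfold prepend. destruct n; simpl; auto. }
    assert (G : forall e, r e = v -> in_GE E0 E1 r s (bcat E0 E1 (s e) [e] x, 1%Z, x)).
    { intros e He. exists (s e), [e], v, [], x. simpl. rewrite Hd.
      repeat split; auto; congruence. }
    specialize (SI x Hx _ _ (G e1 H1) (G e2 H2) eq_refl eq_refl eq_refl).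
    injection SI as SI. destruct x; simpl in SI.
    + injection SI; auto.
    + injection SI as SI. apply (f_equal (fun f => f 0%nat)) in SI. unfold prepend in SI. simpl in SI. auto.
  - intros Hr x _ g h Hg Hh Dg Dh Wk.
    destruct Hg as (va & a & vb & b & z & Ha & Hb & Hz & Haz & Hbz & ->).
    destruct Hh as (va' & a' & vb' & b' & z' & Ha' & Hb' & Hz' & Haz' & Hbz' & ->).
    unfold GE_dom, wtilde in *; simpl in *. subst x.
    rewrite Wk, Dh.
    destruct (Nat.le_ge_cases (length b) (length b')).
    + erewrite (core E0 E1 r s Hr va a vb b z va' a' vb' b' z'); eauto.
    + erewrite (core E0 E1 r s Hr va' a' vb' b' z' va a vb b z); eauto.
Qed.
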